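(* Let $r\ge4$ be even. For any $n\ge r-1$ and $A>0$, there exists $f\in C^r[-1,1]$ with $f\le0$ on $[-1,0]$ and $f\ge0$ on $[0,1]$, such that every algebraic polynomial $P_n$ of degree $\le n$ with $P_n\le0$ on $[-1,0]$, $P_n\ge0$ on $[0,1]$ and $P_n^{(i)}(0)=f^{(i)}(0)$ for $0\le i\le r-1$ obeys $$\|f-P_n\|>A\,\|f^{(r)}\|.$$
   Context: $\|\cdot\|$ is the sup norm on $[-1,1]$. *)

(* Defs.v *)
From Stdlib Require Import Reals Lra.
From Coquelicot Require Import Coquelicot.
Open Scope R_scope.

Definition Cr (r : nat) (f : R -> R) : Prop :=
  (forall (k : nat) (x : R), (k <= r)%nat -> ex_derive_n f k x) /\
  (forall x : R, continuous (Derive_n f r) x).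

Definition supnorm (g : R -> R) : R :=
  real (Lub_Rbar (fun y => exists x, -1 <= x <= 1 /\ y = Rabs (g x))).

Definition algpoly (n : nat) (a : nat -> R) : R -> R :=
  fun x => sum_f_R0 (fun k => a k * x ^ k) n.

Definition sign_change_at0 (g : R -> R) : Prop :=
  (forall x, -1 <= x <= 0 -> g x <= 0) /\ (forall x, 0 <= x <= 1 -> 0 <= g x).

(* Main.v *)
Require Import Defs.
From Stdlib Require Import Reals Lra.
From Coquelicot Require Import Coquelicot.
Open Scope R_scope.
From Stdlib Require Import Lia Factorial.
Fixpoint psum (N : nat) (b : nat -> R) (x : R) : R :=
  match N with O => 0 | S N' => psum N' b x + b N' * x ^ N' end.
Definition node (j : nat) : R := / (INR j + 1).

Lemma node_inj : forall i j, node i = node j -> i = j.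
Proof.
intros i j H; unfold node in H.
apply INR_eq. 
assert (INR i + 1 = INR j + 1).
{ rewrite <- (Rinv_inv (INR i + 1)), <- (Rinv_inv (INR j + 1)), H; reflexivity. }
lra.
Qed.

Module PL.
From mathcomp Require Import all_boot all_order all_algebra.
From mathcomp Require Import Rstruct.
Import Order.TTheory GRing.Theory Num.Theory.

Lemma psum_horner N b x : psum N b x = horner (\poly_(i < N) b i) x.
Proof.
rewrite horner_poly; elim: N => [|N IH] /=; first by rewrite big_ord0.
by rewrite big_ord_recr /= IH RpowE.
Qed.

Lemma poly_lipb (p : {poly R}) : exists L M, 0 <= L /\ forall s t, -1<=s<=1 -> -1<=t<=1 ->
  Rabs (horner p s) <= M /\ Rabs ((horner p s)-(horner p t)) <= L * Rabs (s-t).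
Proof.
elim/poly_ind: p => [|p c [L [M [HL H]]]].
  exists 0, 0; split; first lra. move=> s t _ _; rewrite !horner0.
  change (Rabs 0 <= 0 /\ Rabs (0 - 0) <= 0 * Rabs (s - t)).
  rewrite Rminus_0_r Rabs_R0 Rmult_0_l; lra.
exists (L + M), (M + Rabs c); split.
  have := H 0 0; case; try lra. move=> /(Rle_trans _ _ _ (Rabs_pos _)). lra.
move=> s t Hs Ht; rewrite !hornerMXaddC.
have [H1 H2] := H s t Hs Ht.
have [H3 _] := H t s Ht Hs.
change (Rabs ((horner p s) * s + c) <= M + Rabs c /\
  Rabs (((horner p s) * s + c) - ((horner p t) * t + c)) <= (L + M) * Rabs (s - t)).
split.
  apply: Rle_trans (Rabs_triang _ _) _; rewrite Rabs_mult.
  have : Rabs s <= 1 by apply Rabs_le; lra.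
  have := Rabs_pos (horner p s); have := Rabs_pos s; nra.
have -> : ((horner p s) * s + c) - ((horner p t) * t + c) = ((horner p s) - (horner p t)) * s + (horner p t) * (s - t) by ring.
apply: Rle_trans (Rabs_triang _ _) _; rewrite !Rabs_mult.
have : Rabs s <= 1 by apply Rabs_le; lra.
have := Rabs_pos ((horner p s) - (horner p t)); have := Rabs_pos s; have := Rabs_pos (s - t); nra.
Qed.

Lemma fam_lip (F : nat -> {poly R}) m : exists L, 0 <= L /\ forall i, (i < m)%N ->
  forall s t, -1<=s<=1 -> -1<=t<=1 ->
  Rabs ((horner (F i) s)-(horner (F i) t)) <= L * Rabs (s-t).
Proof.
elim: m => [|m [L [HL IH]]]; first by exists 0; split; [lra|].
have [L' [M' [HL' H']]] := poly_lipb (F m).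
exists (Rmax L L'); split; first by apply: Rle_trans (Rmax_l _ _).
move=> i; rewrite ltnS leq_eqVlt => /orP [/eqP ->|Hi] s t Hs Ht.
  apply: Rle_trans (proj2 (H' s t Hs Ht)) _.
  apply Rmult_le_compat_r; [apply Rabs_pos|apply Rmax_r].
apply: Rle_trans (IH i Hi s t Hs Ht) _.
apply Rmult_le_compat_r; [apply Rabs_pos|apply Rmax_l].
Qed.

Lemma poly_lip N : exists C, 0 <= C /\ forall b B,
  (forall j, lt j N -> Rabs (psum N b (node j)) <= B) ->
  forall s t, -1<=s<=1 -> -1<=t<=1 ->
  Rabs (psum N b s - psum N b t) <= C * B * Rabs (s - t).
Proof.
case: N => [|N].
  exists 0; split; first lra. move=> b B _ s t _ _ /=.
  rewrite Rminus_0_r Rabs_R0 !Rmult_0_l; lra.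
have [L [HL HF]] := fam_lip (fun i => (nth (@GRing.zero _) (lagrange N.+1 node) i : {poly R})) N.+1.
exists (INR N.+1 * L); split; first by apply Rmult_le_pos; [apply pos_INR|].
move=> b B HB s t Hs Ht.
have HB0 : 0 <= B.
  have H0 : lt 0 N.+1 by apply/ssrnat.ltP.
  apply: Rle_trans (HB 0%N H0); apply Rabs_pos.
rewrite !psum_horner.
set q := (X in horner X s - _).
have sq : (size q <= N.+1)%N by apply: size_poly.
have Hq := lagrange_gen (ltn0Sn N) node_inj sq.
have -> : horner (\poly_(i < N.+1) b i) t = horner q t by [].
rewrite Hq !horner_sum RminusE -sumrB.
have nE : forall x : R, Rabs x = Num.norm x by [].
rewrite nE; apply/RleP.
apply: le_trans (ler_norm_sum _ _ _) _.
apply: (@le_trans _ _ ((\sum_(i < N.+1) (B * (L * Rabs (s - t))))%R)).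
  apply: ler_sum => i _.
  rewrite !hornerCM -mulrBr normrM.
  apply: ler_pM; try apply: normr_ge0.
    by move: (HB i (elimT ssrnat.ltP (ltn_ord i))); rewrite psum_horner -/q => /RleP.
  apply/RleP. rewrite -nth_lagrange. exact: HF i (ltn_ord i) s t Hs Ht.
rewrite sumr_const card_ord -mulr_natl -INRE.
apply/RleP; rewrite -!RmultE; right; ring.
Qed.

Lemma psum_bound N b : exists M, forall x, -1 <= x <= 1 -> Rabs (psum N b x) <= M.
Proof.
have [L [M [_ H]]] := poly_lipb (\poly_(i < N) b i).
exists M => x Hx; rewrite psum_horner; exact: (proj1 (H x x Hx Hx)).
Qed.

End PL.

Fixpoint ff (j k : nat) : R := match k with O => 1 | S k' => ff j k' * INR (j - k') end.
Fixpoint dsum (N : nat) (a : nat -> R) (k : nat) (x : R) : R :=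
  match N with O => 0 | S N' => dsum N' a k x + a N' * ff N' k * x ^ (N' - k) end.

Lemma dsum_derive N a k x : is_derive (dsum N a k) x (dsum N a (S k) x).
Proof.
induction N as [|N IH]; simpl.
- apply (is_derive_const 0).
- apply (is_derive_plus (dsum N a k) (fun y => a N * ff N k * y ^ (N - k))); [exact IH|].
  assert (H := is_derive_scal (fun y => y ^ (N - k)) x (a N * ff N k) _
     (is_derive_pow (fun y => y) (N - k) x 1 (is_derive_id x))).
  replace (a N * (ff N k * INR (N - k)) * x ^ (N - S k)) with
    (scal (a N * ff N k) (INR (N - k) * 1 * x ^ Init.Nat.pred (N - k))).
  + exact H.
  + unfold scal; simpl; unfold mult; simpl.
    replace (Init.Nat.pred (N - k)) with (N - S k)%nat by lia. ring.
Qed.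

Lemma Derive_n_dsum N a k x : Derive_n (dsum N a 0) k x = dsum N a k x.
Proof.
revert x; induction k as [|k IH]; intro x; [reflexivity|].
simpl. rewrite (Derive_ext _ (dsum N a k) x IH).
apply is_derive_unique, dsum_derive.
Qed.

Lemma ex_derive_n_dsum N a k x : ex_derive_n (dsum N a 0) k x.
Proof.
destruct k as [|k]; [exact I|].
simpl. apply (ex_derive_ext (dsum N a k)).
- intro t; symmetry; apply Derive_n_dsum.
- eexists; apply dsum_derive.
Qed.

Lemma psum_dsum N a x : psum N a x = dsum N a 0 x.
Proof.
induction N as [|N IH]; simpl; [reflexivity|].
rewrite IH, Nat.sub_0_r; ring.
Qed.

Lemma algpoly_psum n a x : algpoly n a x = psum (S n) a x.
Proof.
induction n as [|n IH]; unfold algpoly in *; simpl in *; [ring|].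
rewrite IH; reflexivity.
Qed.

Lemma ff_zero j k : (j < k)%nat -> ff j k = 0.
Proof.
induction k as [|k IH]; intro H; [lia|]. simpl.
destruct (Nat.eq_dec j k) as [->|Hne].
- rewrite Nat.sub_diag; simpl; ring.
- rewrite IH by lia; ring.
Qed.

Lemma ff_pos j k : (k <= j)%nat -> 0 < ff j k.
Proof.
induction k as [|k IH]; intro H; simpl; [lra|].
apply Rmult_lt_0_compat; [apply IH; lia|]. apply lt_0_INR; lia.
Qed.

Lemma dsum_at0 N a k : dsum N a k 0 = if Nat.ltb k N then a k * ff k k else 0.
Proof.
induction N as [|N IH]; simpl; [reflexivity|].
rewrite IH.
destruct (Nat.lt_total N k) as [Hlt|[Heq|Hgt]].
- rewrite (ff_zero N k Hlt).
  replace (Nat.ltb k N) with false by (symmetry; apply Nat.ltb_ge; lia).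
  replace (Nat.ltb k (S N)) with false by (symmetry; apply Nat.ltb_ge; lia). ring.
- subst N. rewrite Nat.sub_diag.
  replace (Nat.ltb k k) with false by (symmetry; apply Nat.ltb_ge; lia).
  replace (Nat.ltb k (S k)) with true by (symmetry; apply Nat.ltb_lt; lia). simpl; ring.
- rewrite pow_i by lia.
  replace (Nat.ltb k N) with true by (symmetry; apply Nat.ltb_lt; lia).
  replace (Nat.ltb k (S N)) with true by (symmetry; apply Nat.ltb_lt; lia). ring.
Qed.

Definition hfun (c d : R) (x : R) : R := c * ((Rabs (x + d) - Rabs (x - d)) / (2 * d)).
Fixpoint gf (c d : R) (k : nat) : R -> R :=
  match k with O => hfun c d | S k' => fun x => RInt (gf c d k') 0 x end.

Lemma h_cont c d x : continuous (hfun c d) x.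
Proof.
unfold hfun.
apply (continuous_mult (fun _ => c)); [apply continuous_const|].
apply (continuous_mult (fun y => Rabs (y + d) - Rabs (y - d)) (fun _ => / (2 * d))); [|apply continuous_const].
apply (continuous_plus (fun y => Rabs (y + d)) (fun y => - Rabs (y - d))).
- apply continuous_Rabs_comp. apply (continuous_plus (fun y => y) (fun _ => d)); [apply continuous_id|apply continuous_const].
- apply (continuous_opp (fun y => Rabs (y - d))). apply continuous_Rabs_comp.
  apply (continuous_plus (fun y => y) (fun _ => - d)); [apply continuous_id|apply continuous_const].
Qed.

Lemma gf_cont c d k x : continuous (gf c d k) x.
Proof.
revert x; induction k as [|k IH]; intro x; [apply h_cont|].
apply (ex_derive_continuous (gf c d (S k))). exists (gf c d k x).
apply (is_derive_RInt (gf c d k) (gf c d (S k)) 0 x); [|apply IH].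
apply filter_forall; intro b.
change (is_RInt (gf c d k) 0 b (RInt (gf c d k) 0 b)); apply (RInt_correct (gf c d k)).
apply (@ex_RInt_continuous R_CompleteNormedModule); intros; apply IH.
Qed.

Lemma gf_ex_RInt c d k a b : ex_RInt (gf c d k) a b.
Proof. apply (@ex_RInt_continuous R_CompleteNormedModule); intros; apply gf_cont. Qed.

Lemma gf_derive c d k x : is_derive (gf c d (S k)) x (gf c d k x).
Proof.
apply (is_derive_RInt (gf c d k) (gf c d (S k)) 0 x); [|apply gf_cont].
apply filter_forall; intro b.
change (is_RInt (gf c d k) 0 b (RInt (gf c d k) 0 b)); apply (RInt_correct (gf c d k)).
apply gf_ex_RInt.
Qed.

Lemma gf_at0 c d k : gf c d (S k) 0 = 0.
Proof. simpl. apply (@RInt_point R_CompleteNormedModule). Qed.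

Lemma h_odd c d x : hfun c d (- x) = - hfun c d x.
Proof.
unfold hfun. replace (- x + d) with (- (x - d)) by ring. replace (- x - d) with (- (x + d)) by ring.
rewrite !Rabs_Ropp. unfold Rdiv; ring.
Qed.

Lemma h_bound c d x : 0 < d -> 0 <= c -> Rabs (hfun c d x) <= c.
Proof.
intros Hd Hc. unfold hfun. rewrite Rabs_mult, (Rabs_pos_eq c Hc).
rewrite <- (Rmult_1_r c) at 2. apply Rmult_le_compat_l; [exact Hc|].
unfold Rdiv; rewrite Rabs_mult, Rabs_inv, (Rabs_pos_eq (2*d)) by lra.
apply (Rmult_le_reg_r (2 * d)); [lra|]. rewrite Rmult_assoc, Rinv_l by lra.
assert (H := Rabs_triang_inv2 (x + d) (x - d)). replace (x + d - (x - d)) with (2 * d) in H by ring.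
rewrite (Rabs_pos_eq (2*d)) in H by lra. lra.
Qed.

Lemma h_pos c d x : 0 < d -> 0 <= c -> 0 <= x -> 0 <= hfun c d x.
Proof.
intros Hd Hc Hx. unfold hfun. apply Rmult_le_pos; [exact Hc|].
unfold Rdiv; apply Rmult_le_pos; [|left; apply Rinv_0_lt_compat; lra].
rewrite (Rabs_pos_eq (x + d)) by lra. unfold Rabs; destruct Rcase_abs; lra.
Qed.

Lemma h_top c d x : 0 < d -> d <= x -> hfun c d x = c.
Proof.
intros Hd Hx. unfold hfun. rewrite (Rabs_pos_eq (x + d)), (Rabs_pos_eq (x - d)) by lra.
field. lra.
Qed.

Lemma RInt_pow c a k x : RInt (fun t => c * (t - a) ^ k / INR (fact k)) a x
   = c * (x - a) ^ (S k) / INR (fact (S k)).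
Proof.
apply is_RInt_unique.
assert (Hf : forall j, INR (fact j) <> 0) by (intro j; apply not_0_INR, fact_neq_0).
replace (c * (x - a) ^ S k / INR (fact (S k))) with
  (minus (c * (x - a) ^ S k / INR (fact (S k))) (c * (a - a) ^ S k / INR (fact (S k)))).
2:{ unfold minus, plus, opp; simpl. replace (a - a) with 0 by ring. unfold Rdiv; ring. }
apply (is_RInt_derive (fun y => c * (y - a) ^ S k / INR (fact (S k)))).
- intros y _. auto_derive; [exact I|].
  change (match k with 0%nat => 1 | S _ => INR k + 1 end) with (INR (S k)).
  change (fact k + k * fact k)%nat with (fact (S k)).
  rewrite fact_simpl, mult_INR. unfold Rdiv. rewrite Rinv_mult. replace (y + - a) with (y - a) by ring.
  field. split; [apply Hf|apply not_0_INR; lia].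
- intros y _. apply (ex_derive_continuous (fun t => c * (t - a) ^ k / INR (fact k))).
  auto_derive. exact I.
Qed.


Lemma pow_cont c a k y : continuous (fun t => c * (t - a) ^ k / INR (fact k)) y.
Proof. apply (ex_derive_continuous (fun t => c * (t - a) ^ k / INR (fact k))). auto_derive. exact I. Qed.

Lemma pow_ex_RInt c a k u v : ex_RInt (fun t => c * (t - a) ^ k / INR (fact k)) u v.
Proof. apply (@ex_RInt_continuous R_CompleteNormedModule); intros; apply pow_cont. Qed.

Lemma gf_bounds c d k x : 0 < d -> 0 <= c -> 0 <= x ->
  0 <= gf c d k x <= c * (x - 0) ^ k / INR (fact k).
Proof.
intros Hd Hc. revert x. induction k as [|k IH]; intros x Hx.
- simpl. replace (c * 1 / 1) with c by field. split; [apply h_pos; auto|].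
  apply Rle_trans with (Rabs (hfun c d x)); [apply Rle_abs|apply h_bound; auto].
- simpl gf. split.
  + apply RInt_ge_0; [exact Hx|apply gf_ex_RInt|]. intros t Ht; apply IH; lra.
  + rewrite <- RInt_pow. apply RInt_le; [exact Hx|apply gf_ex_RInt|apply pow_ex_RInt|].
    intros t Ht; apply IH; lra.
Qed.

Lemma gf_lower c d k x : 0 < d -> 0 <= c -> d <= x ->
  c * (x - d) ^ k / INR (fact k) <= gf c d k x.
Proof.
intros Hd Hc. revert x. induction k as [|k IH]; intros x Hx.
- simpl. rewrite h_top by auto. right; field.
- simpl gf. rewrite <- (RInt_Chasles (V:=R_CompleteNormedModule) (gf c d k) 0 d x) by apply gf_ex_RInt.
  change (plus ?u ?v) with (u + v).
  rewrite <- RInt_pow.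
  assert (H0 : 0 <= RInt (gf c d k) 0 d).
  { apply RInt_ge_0; [lra|apply gf_ex_RInt|]. intros t Ht; apply gf_bounds; lra. }
  assert (H1 : RInt (fun t => c * (t - d) ^ k / INR (fact k)) d x <= RInt (gf c d k) d x).
  { apply RInt_le; [exact Hx|apply pow_ex_RInt|apply gf_ex_RInt|]. intros t Ht; apply IH; lra. }
  lra.
Qed.

Lemma gf_odd c d k x : gf c d k (- x) = (-1) ^ (S k) * gf c d k x.
Proof.
revert x. induction k as [|k IH]; intro x.
- simpl. rewrite h_odd. ring.
- simpl gf.
  assert (H := RInt_comp_lin (V:=R_CompleteNormedModule) (gf c d k) (-1) 0 0 x (gf_ex_RInt _ _ _ _ _)).
  replace (-1 * 0 + 0) with 0 in H by ring. replace (-1 * x + 0) with (- x) in H by ring.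
  rewrite <- H.
  rewrite (RInt_ext _ (fun y => scal ((-1) ^ S (S k)) (gf c d k y))).
  2:{ intros y _. replace (-1 * y + 0) with (- y) by ring. rewrite IH.
      unfold scal; simpl; unfold mult; simpl. ring. }
  rewrite (RInt_scal (V:=R_CompleteNormedModule)) by apply gf_ex_RInt. reflexivity.
Qed.


Lemma supnorm_spec g K : (forall x, -1 <= x <= 1 -> Rabs (g x) <= K) ->
  supnorm g <= K /\ forall x, -1 <= x <= 1 -> Rabs (g x) <= supnorm g.
Proof.
intro H. unfold supnorm.
set (E := fun y => exists x, -1 <= x <= 1 /\ y = Rabs (g x)).
destruct (Lub_Rbar_correct E) as [Hub Hlub].
assert (HK : is_ub_Rbar E K).
{ intros y [x [Hx ->]]. simpl. apply H, Hx. }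
assert (H0 : E (Rabs (g 0))) by (exists 0; split; [lra|reflexivity]).
specialize (Hlub K HK). specialize (Hub _ H0) as Hub0.
destruct (Lub_Rbar E) as [l| |] eqn:Hl; simpl in *; try contradiction.
split; [exact Hlub|].
intros x Hx. assert (Hx' : E (Rabs (g x))) by (exists x; split; [exact Hx|reflexivity]).
specialize (Hub _ Hx'). exact Hub.
Qed.

Lemma psum_ind N k v x : psum N (fun j => if Nat.eqb j k then v else 0) x =
  if Nat.ltb k N then v * x ^ k else 0.
Proof.
induction N as [|N IH]; simpl; [reflexivity|]. rewrite IH.
destruct (Nat.eqb_spec N k) as [->|Hne].
- replace (Nat.ltb k k) with false by (symmetry; apply Nat.ltb_ge; lia).
  replace (Nat.ltb k (S k)) with true by (symmetry; apply Nat.ltb_lt; lia). ring.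
- destruct (Nat.ltb_spec k N); destruct (Nat.ltb_spec k (S N)); try lia; ring.
Qed.

Lemma psum_plus N u w x : psum N (fun j => u j + w j) x = psum N u x + psum N w x.
Proof. induction N as [|N IH]; simpl; [ring|]. rewrite IH; ring. Qed.

Lemma psum_ext N u w x : (forall j, (j < N)%nat -> u j = w j) -> psum N u x = psum N w x.
Proof.
induction N as [|N IH]; intro H; simpl; [reflexivity|].
rewrite IH by (intros; apply H; lia). rewrite H by lia. reflexivity.
Qed.

Lemma psum_split r N a x : psum (r + N) a x = psum r a x + x ^ r * psum N (fun i => a (i + r)%nat) x.
Proof.
induction N as [|N IH].
- rewrite Nat.add_0_r; simpl; ring.
- rewrite Nat.add_succ_r. simpl. rewrite IH, pow_add, (Nat.add_comm N r). ring.
Qed.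

Lemma dsum_zero N a k x : (N <= k)%nat -> dsum N a k x = 0.
Proof.
induction N as [|N IH]; intro H; simpl; [reflexivity|].
rewrite IH by lia. rewrite (ff_zero N k) by lia. ring.
Qed.

Lemma pow_odd_opp m x : (- x) ^ (2 * m + 1) = - x ^ (2 * m + 1).
Proof.
replace (- x) with (-1 * x) by ring. rewrite Rpow_mult_distr.
replace (2 * m + 1)%nat with (S (2 * m)) by lia. rewrite pow_1_odd. ring.
Qed.

Lemma pow_even_opp m x : (- x) ^ (2 * m) = x ^ (2 * m).
Proof.
replace (- x) with (-1 * x) by ring. rewrite Rpow_mult_distr.
rewrite pow_1_even. ring.
Qed.

Lemma gf_unit c d k x : 0 < d -> 0 <= c -> 0 <= x <= 1 -> 0 <= gf c d k x <= c.
Proof.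
intros Hd Hc Hx. destruct (gf_bounds c d k x Hd Hc (proj1 Hx)) as [H1 H2].
split; [exact H1|]. apply Rle_trans with (1 := H2).
rewrite Rminus_0_r.
assert (Hf : 1 <= INR (fact k)) by (apply (le_INR 1); apply lt_O_fact).
assert (Hp : x ^ k <= 1) by (rewrite <- (pow1 k); apply pow_incr; lra).
assert (Hp0 : 0 <= x ^ k) by (apply pow_le; lra).
unfold Rdiv. rewrite Rmult_assoc. rewrite <- (Rmult_1_r c) at 2.
apply Rmult_le_compat_l; [exact Hc|].
apply Rle_trans with (x ^ k * 1).
- apply Rmult_le_compat_l; [exact Hp0|]. rewrite <- Rinv_1. apply Rinv_le_contravar; lra.
- lra.
Qed.


Theorem lemma3p14 (r n : nat) (A : R) :
  (4 <= r)%nat -> Nat.Even r -> (r - 1 <= n)%nat -> 0 < A ->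
  exists f : R -> R,
    Cr r f /\ sign_change_at0 f /\
    forall a : nat -> R,
      sign_change_at0 (algpoly n a) ->
      (forall i : nat, (i <= r - 1)%nat -> Derive_n (algpoly n a) i 0 = Derive_n f i 0) ->
      supnorm (fun x => f x - algpoly n a x) > A * supnorm (Derive_n f r).
Proof.
intros Hr4 Hev Hn HA.
destruct Hev as [p Hp].
set (m := (p - 2)%nat).
assert (Hr3 : (r - 3 = 2 * m + 1)%nat) by (unfold m; lia).
assert (Hr1 : (r - 1 = 2 * m + 1 + 2)%nat) by (unfold m; lia).
assert (Hr0 : (r = 2 * m + 1 + 3)%nat) by (unfold m; lia).
set (N := (S n - r)%nat).
destruct (PL.poly_lip N) as [C [HC HL]].
assert (HF0 : 0 < INR (fact r)) by (apply lt_0_INR, lt_O_fact).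
assert (H2r : 0 < 2 ^ r) by (apply pow_lt; lra).
set (K := 4 * C * (A + 1) * INR N ^ r * 2 ^ r * INR (fact r)).
assert (HK : 0 <= K).
{ unfold K. repeat apply Rmult_le_pos; try lra. apply pow_le, pos_INR. }
set (s := / (2 * (K + 1))).
assert (Hs : 0 < s) by (unfold s; apply Rinv_0_lt_compat; lra).
assert (Hs2 : 2 * s <= 1).
{ unfold s. rewrite Rinv_mult. replace (2 * (/ 2 * / (K + 1))) with (/ (K + 1)) by (field; lra).
  rewrite <- Rinv_1. apply Rinv_le_contravar; lra. }
assert (HsK : 4 * s * K < 2).
{ unfold s. replace (4 * / (2 * (K + 1)) * K) with (2 * (K / (K + 1))) by (field; lra).
  cut (K / (K + 1) < 1); [lra|]. apply (Rmult_lt_reg_r (K + 1)); [lra|].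
  unfold Rdiv; rewrite Rmult_assoc, Rinv_l by lra. lra. }
set (d := s / 2).
assert (Hd : 0 < d) by (unfold d; lra).
set (c := 2 ^ r * INR (fact r) / s).
assert (Hc : 0 < c) by (unfold c; apply Rdiv_lt_0_compat; [apply Rmult_lt_0_compat|]; lra).
set (t := fun j => (if Nat.eqb j (r - 3) then s ^ 2 else 0) + (if Nat.eqb j (r - 1) then -1 else 0)).
assert (HT : forall x, psum r t x = s ^ 2 * x ^ (r - 3) - x ^ (r - 1)).
{ intro x. unfold t. rewrite psum_plus, !psum_ind.
  replace (Nat.ltb (r - 3) r) with true by (symmetry; apply Nat.ltb_lt; lia).
  replace (Nat.ltb (r - 1) r) with true by (symmetry; apply Nat.ltb_lt; lia). ring. }
set (f := fun x => psum r t x + gf c d r x).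
exists f.
set (F := fun k x => dsum r t k x + gf c d (r - k) x).
assert (HFd : forall k x, (k < r)%nat -> is_derive (F k) x (F (S k) x)).
{ intros k x Hk. unfold F. replace (r - k)%nat with (S (r - S k)) by lia.
  apply (is_derive_plus (dsum r t k) (gf c d (S (r - S k)))); [apply dsum_derive|apply gf_derive]. }
assert (HFn : forall k x, (k <= r)%nat -> Derive_n f k x = F k x).
{ induction k as [|k IHk]; intros x Hk.
  - simpl. unfold F, f. rewrite psum_dsum, Nat.sub_0_r. reflexivity.
  - simpl. rewrite (Derive_ext _ (F k) x) by (intro; apply IHk; lia).
    apply is_derive_unique, HFd; lia. }
assert (Hh : forall x, Derive_n f r x = hfun c d x).
{ intro x. rewrite HFn by lia. unfold F. rewrite dsum_zero by lia. rewrite Nat.sub_diag. simpl. ring. }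
split.
{ split.
  - intros k x Hk. destruct k as [|k]; [exact I|]. simpl.
    apply (ex_derive_ext (F k)); [intro; symmetry; apply HFn; lia|].
    eexists; apply HFd; lia.
  - intro x. apply (continuous_ext (hfun c d)); [intro; symmetry; apply Hh|apply h_cont]. }
assert (Hpos : forall x, 0 <= x <= 1 -> 0 <= f x).
{ intros x Hx. unfold f. rewrite HT, Hr3, Hr1, (pow_add x (2 * m + 1) 2).
  set (u := x ^ (2 * m + 1)).
  assert (Hu : 0 <= u) by (apply pow_le; lra).
  destruct (Rle_or_lt x s) as [Hxs|Hxs].
  - assert (H0 := proj1 (gf_bounds c d r x Hd (Rlt_le _ _ Hc) (proj1 Hx))).
    assert (0 <= u * (s ^ 2 - x ^ 2)) by (apply Rmult_le_pos; [exact Hu|]; simpl; nra).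
    assert (E : s ^ 2 * u - u * x ^ 2 = u * (s ^ 2 - x ^ 2)) by ring. lra.
  - assert (H1 := gf_lower c d r x Hd (Rlt_le _ _ Hc) ltac:(unfold d; lra)).
    assert (H2 : (x / 2) ^ r <= (x - d) ^ r) by (apply pow_incr; unfold d; lra).
    assert (H3 : c * (x / 2) ^ r / INR (fact r) = u * x ^ 3 / s).
    { unfold Rdiv at 2. rewrite Rpow_mult_distr, pow_inv.
      unfold u. rewrite <- pow_add, <- Hr0. unfold c. field. lra. }
    assert (H4 : c * (x / 2) ^ r / INR (fact r) <= c * (x - d) ^ r / INR (fact r)).
    { unfold Rdiv. apply Rmult_le_compat_r; [left; apply Rinv_0_lt_compat; lra|].
      apply Rmult_le_compat_l; lra. }
    assert (H5 : 0 <= u * x ^ 2 * ((x - s) / s)).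
    { apply Rmult_le_pos; [apply Rmult_le_pos; [exact Hu|apply pow_le; lra]|].
      apply Rdiv_le_0_compat; lra. }
    assert (H6 : u * x ^ 3 / s = u * x ^ 2 + u * x ^ 2 * ((x - s) / s)) by (field; lra).
    assert (H7 : 0 <= s ^ 2 * u) by (apply Rmult_le_pos; [apply pow_le; lra|exact Hu]).
    lra. }
assert (Hodd : forall x, f (- x) = - f x).
{ intro x. unfold f. rewrite !HT, Hr3, Hr1.
  replace (2 * m + 1 + 2)%nat with (2 * (m + 1) + 1)%nat by lia.
  rewrite !pow_odd_opp, gf_odd, Hp, pow_1_odd. ring. }
split.
{ split.
  - intros x Hx. rewrite <- (Ropp_involutive x), Hodd.
    assert (0 <= f (- x)) by (apply Hpos; lra). lra.
  - exact Hpos. }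
intros a Hsign Hder.
assert (Hat : forall j, (j < r)%nat -> a j = t j).
{ intros j Hj. specialize (Hder j ltac:(lia)).
  rewrite (Derive_n_ext (algpoly n a) (dsum (S n) a 0)) in Hder
    by (intro; rewrite algpoly_psum; apply psum_dsum).
  rewrite Derive_n_dsum, HFn in Hder by lia. unfold F in Hder.
  rewrite !dsum_at0 in Hder. replace (r - j)%nat with (S (r - S j)) in Hder by lia.
  rewrite gf_at0 in Hder.
  replace (Nat.ltb j (S n)) with true in Hder by (symmetry; apply Nat.ltb_lt; lia).
  replace (Nat.ltb j r) with true in Hder by (symmetry; apply Nat.ltb_lt; lia).
  assert (Hff := ff_pos j j (le_n j)).
  apply (Rmult_eq_reg_r (ff j j)); [lra|lra]. }
set (b := fun i => a (i + r)%nat).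
assert (HP : forall x, algpoly n a x = psum r t x + x ^ r * psum N b x).
{ intro x. rewrite algpoly_psum. replace (S n) with (r + N)%nat by (unfold N; lia).
  rewrite psum_split. rewrite (psum_ext r a t) by exact Hat. reflexivity. }
assert (Hfp : forall x, f x - algpoly n a x = gf c d r x - x ^ r * psum N b x).
{ intro x. rewrite HP. unfold f. ring. }
apply Rnot_le_lt. intro Hle.
assert (Hsh : supnorm (Derive_n f r) <= c).
{ apply supnorm_spec. intros x _. rewrite Hh. apply h_bound; lra. }
assert (Hgb : forall x, -1 <= x <= 1 -> Rabs (gf c d r x) <= c).
{ intros x Hx. destruct (Rle_or_lt 0 x) as [H0|H0].
  - rewrite Rabs_pos_eq by (apply gf_unit; lra). apply gf_unit; lra.
  - rewrite <- (Ropp_involutive x), gf_odd, Rabs_mult, pow_1_abs, Rmult_1_l.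
    rewrite Rabs_pos_eq by (apply gf_unit; lra). apply gf_unit; lra. }
destruct (PL.psum_bound N b) as [Mq HMq].
assert (Hdiff : forall x, -1 <= x <= 1 -> Rabs (f x - algpoly n a x) <= A * c).
{ intros x Hx.
  destruct (supnorm_spec (fun x => f x - algpoly n a x) (c + Mq)) as [_ H2].
  - intros y Hy. rewrite Hfp.
    apply Rle_trans with (1 := Rabs_triang _ _). rewrite Rabs_Ropp, Rabs_mult.
    assert (Hy1 : Rabs (y ^ r) <= 1).
    { rewrite <- RPow_abs. rewrite <- (pow1 r). apply pow_incr. split; [apply Rabs_pos|].
      apply Rabs_le; lra. }
    assert (Hq := HMq y Hy). assert (Hg := Hgb y Hy).
    assert (Rabs (y ^ r) * Rabs (psum N b y) <= 1 * Mq).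
    { apply Rmult_le_compat; try apply Rabs_pos; assumption. }
    lra.
  - specialize (H2 x Hx). simpl in H2. apply Rle_trans with (1 := H2).
    apply Rle_trans with (1 := Hle). apply Rmult_le_compat_l; lra. }
assert (Hnode : forall j, (j < N)%nat -> Rabs (psum N b (node j)) <= (A + 1) * c * INR N ^ r).
{ intros j Hj. unfold node.
  set (y := / (INR j + 1)).
  assert (Hj0 : 1 <= INR j + 1) by (assert (0 <= INR j) by apply pos_INR; lra).
  assert (Hy : 0 < y <= 1).
  { unfold y. split; [apply Rinv_0_lt_compat; lra|]. rewrite <- Rinv_1. apply Rinv_le_contravar; lra. }
  assert (H1 := Hdiff y ltac:(lra)). rewrite Hfp in H1. assert (H2 := Hgb y ltac:(lra)).
  assert (H3 : Rabs (y ^ r * psum N b y) <= (A + 1) * c).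
  { replace (y ^ r * psum N b y) with (gf c d r y - (gf c d r y - y ^ r * psum N b y)) by ring.
    apply Rle_trans with (1 := Rabs_triang _ _). rewrite Rabs_Ropp. lra. }
  rewrite Rabs_mult, Rabs_pos_eq in H3 by (apply pow_le; lra).
  assert (Hyr : (INR j + 1) ^ r * y ^ r = 1).
  { rewrite <- Rpow_mult_distr. unfold y. rewrite Rinv_r by lra. apply pow1. }
  assert (HjN : (INR j + 1) ^ r <= INR N ^ r).
  { apply pow_incr. split; [lra|]. rewrite <- S_INR. apply le_INR. lia. }
  replace (Rabs (psum N b y)) with ((INR j + 1) ^ r * (y ^ r * Rabs (psum N b y))).
  2:{ rewrite <- Rmult_assoc, Hyr. ring. }
  assert (0 <= (INR j + 1) ^ r) by (apply pow_le; lra).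
  apply Rle_trans with ((INR j + 1) ^ r * ((A + 1) * c)).
  - apply Rmult_le_compat_l; assumption.
  - rewrite Rmult_comm. apply Rmult_le_compat_l; [|exact HjN].
    apply Rmult_le_pos; lra. }
set (z := 2 * s).
set (w := z ^ (2 * m + 1)).
assert (Hw : 0 < w) by (apply pow_lt; unfold z; lra).
assert (Hqz : 3 <= 8 * s * psum N b z).
{ assert (H := proj2 Hsign z ltac:(unfold z; lra)). rewrite HP, HT, Hr3, Hr1 in H.
  replace (z ^ r) with (z ^ (2 * m + 1 + 3)) in H by (rewrite <- Hr0; reflexivity). rewrite (pow_add z (2 * m + 1) 2), (pow_add z (2 * m + 1) 3) in H. fold w in H.
  assert (H' : 0 <= w * (s ^ 2 * (8 * s * psum N b z - 3))).
  { replace (w * (s ^ 2 * (8 * s * psum N b z - 3))) with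
      (s ^ 2 * w - w * z ^ 2 + w * z ^ 3 * psum N b z) by (unfold z; ring). exact H. }
  assert (H'' : 0 <= s ^ 2 * (8 * s * psum N b z - 3)).
  { apply (Rmult_le_reg_l w); [exact Hw|]. rewrite Rmult_0_r; exact H'. }
  assert (H3 : 0 <= 8 * s * psum N b z - 3).
  { apply (Rmult_le_reg_l (s ^ 2)); [apply pow_lt; lra|]. rewrite Rmult_0_r; exact H''. }
  lra. }
assert (Hqmz : 8 * s * psum N b (- z) <= -3).
{ assert (H := proj1 Hsign (- z) ltac:(unfold z; lra)). rewrite HP, HT, Hr3, Hr1 in H.
  replace (2 * m + 1 + 2)%nat with (2 * (m + 1) + 1)%nat in H by lia.
  rewrite !pow_odd_opp in H. rewrite Hp, pow_even_opp in H.
  replace (2 * p)%nat with (2 * m + 1 + 3)%nat in H by (unfold m; lia).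
  replace (2 * (m + 1) + 1)%nat with (2 * m + 1 + 2)%nat in H by lia.
  rewrite (pow_add z (2 * m + 1) 2), (pow_add z (2 * m + 1) 3) in H. fold w in H.
  assert (H' : 0 <= w * (s ^ 2 * (-3 - 8 * s * psum N b (- z)))).
  { replace (w * (s ^ 2 * (-3 - 8 * s * psum N b (- z)))) with
      (- (s ^ 2 * - w - - (w * z ^ 2) + w * z ^ 3 * psum N b (- z))) by (unfold z; ring). lra. }
  assert (H'' : 0 <= s ^ 2 * (-3 - 8 * s * psum N b (- z))).
  { apply (Rmult_le_reg_l w); [exact Hw|]. rewrite Rmult_0_r; exact H'. }
  assert (H3 : 0 <= -3 - 8 * s * psum N b (- z)).
  { apply (Rmult_le_reg_l (s ^ 2)); [apply pow_lt; lra|]. rewrite Rmult_0_r; exact H''. }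
  lra. }
assert (HLz := HL b _ Hnode z (- z) ltac:(unfold z; lra) ltac:(unfold z; lra)).
replace (z - - z) with (4 * s) in HLz by (unfold z; ring).
rewrite (Rabs_pos_eq (4 * s)) in HLz by lra.
assert (HCB : C * ((A + 1) * c * INR N ^ r) * (4 * s) = K).
{ unfold K, c. field. lra. }
rewrite HCB in HLz.
assert (Hd2 : psum N b z - psum N b (- z) <= K).
{ apply Rle_trans with (2 := HLz). apply Rle_abs. }
assert (6 <= 8 * s * (psum N b z - psum N b (- z))) by lra.
assert (8 * s * (psum N b z - psum N b (- z)) <= 8 * s * K) by (apply Rmult_le_compat_l; lra).
lra.
Qed.
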